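(* Let $f \in \mathbb{N}_0[x^{\pm 1}]$ be such that $f(1) = p + q$ for some prime numbers $p$ and $q$. Then $f$ can be written as the sum of two irreducible elements of $\mathbb{N}_0[x^{\pm 1}]$.
   Context: $\mathbb{N}_0[x^{\pm 1}]$ denotes the semiring of Laurent polynomials in $x$ with nonnegative integer coefficients. Its units are exactly the monomials $x^k$, $k \in \mathbb{Z}$. An element $f$ is irreducible if it is nonzero, not a unit, and whenever $f = gh$ with $g,h \in \mathbb{N}_0[x^{\pm 1}]$, one of $g,h$ is a unit. *)

(* Defs.v *)
From mathcomp Require Import all_boot all_algebra.
Set Implicit Arguments. Unset Strict Implicit. Unset Printing Implicit Defensive.
Local Open Scope ring_scope.

(* The semiring N_0[x^{+-1}] of Laurent polynomials with nonnegative integer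
   coefficients, presented as the localization of N_0[x] = {poly nat} at x:
   a pair (n, P) denotes the Laurent polynomial x^{-n} * P(x).
   Two representatives denote the same element iff x^m P = x^n Q. *)
Definition laurent := (nat * {poly nat})%type.

Definition leq_l (f g : laurent) : Prop := 'X^(g.1) * f.2 = 'X^(f.1) * g.2.

Definition ladd (f g : laurent) : laurent :=
  ((f.1 + g.1)%N, 'X^(g.1) * f.2 + 'X^(f.1) * g.2).

Definition lmul (f g : laurent) : laurent := ((f.1 + g.1)%N, f.2 * g.2).

Definition leval1 (f : laurent) : nat := f.2.[1].

Definition lunit (f : laurent) : Prop :=
  exists n j : nat, leq_l f (n, 'X^j).

Definition lzero (f : laurent) : Prop := f.2 = 0.

Definition lirreducible (f : laurent) : Prop :=
  ~ lzero f /\ ~ lunit f /\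
  forall g h : laurent, leq_l f (lmul g h) -> lunit g \/ lunit h.

(* Main.v *)
Require Import Defs.
From mathcomp Require Import all_boot all_algebra.

Section Helpers.
Local Open Scope ring_scope.
Import GRing.Theory.

Lemma ev1_eq0 (A : {poly nat}) : A.[1] = 0%N -> A = 0.
Proof.
elim/poly_ind: A => [//|Q c IH]; rewrite hornerMXaddC mulr1.
move=> /eqP; rewrite addn_eq0 => /andP[/eqP /IH -> /eqP ->].
by rewrite mul0r add0r.
Qed.

Lemma ev1_eq1 (A : {poly nat}) : A.[1] = 1%N -> exists j, A = 'X^j.
Proof.
elim/poly_ind: A => [|Q c IH]; first by rewrite horner0.
rewrite hornerMXaddC mulr1 => H.
have [Q0|Q1] : (Q.[1] = 0%N /\ c = 1%N) \/ (Q.[1] = 1%N /\ c = 0%N).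
  by move: H; case: (Q.[1]) => [|[|k]] /=; case: c => [|[|c]] //= ; auto.
- case: Q0 => /ev1_eq0 -> ->; exists 0%N; by rewrite mul0r add0r expr0.
- case: Q1 => /IH [j ->] ->; exists j.+1; by rewrite addr0 exprSr.
Qed.

Lemma split_poly (P : {poly nat}) (k : nat) : (k <= P.[1])%N ->
  exists G H : {poly nat}, G + H = P /\ G.[1] = k.
Proof.
elim/poly_ind: P k => [|Q c IH] k.
  rewrite horner0 leqn0 => /eqP ->; exists 0, 0; by rewrite addr0 horner0.
rewrite hornerMXaddC mulr1 => Hk.
case: (leqP k Q.[1]) => Hq.
  have [G [H [E1 E2]]] := IH k Hq.
  exists (G * 'X), (H * 'X + c%:P); split.
    by rewrite addrA -mulrDl E1.
  by rewrite hornerMX mulr1.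
exists (Q * 'X + (k - Q.[1])%N%:P), ((c - (k - Q.[1]))%N%:P); split.
  rewrite -addrA -polyCD; congr (_ + _%:P).
  change ((k - Q.[1]) + (c - (k - Q.[1])) = c)%N. 
  rewrite subnKC //; rewrite leq_subLR //.
rewrite hornerMXaddC mulr1; change (Q.[1] + (k - Q.[1]) = k)%N.
by rewrite subnKC // ltnW.
Qed.

Lemma prime_irr (n : nat) (G : {poly nat}) : prime G.[1] -> lirreducible (n, G).
Proof.
move=> pr.
have unit1 : forall a : laurent, a.2.[1] = 1%N -> lunit a.
  move=> [a1 A] /= /ev1_eq1 [j ->]; exists a1, j; by rewrite /leq_l /= mulrC.
split; [|split].
- rewrite /lzero /= => G0; move: pr; by rewrite G0 horner0.
- move=> [m [j]]; rewrite /leq_l /= => /(congr1 (horner^~ 1)).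
  rewrite !hornerM !hornerXn !expr1n !mul1r => E; move: pr; by rewrite E.
- move=> [a1 A] [b1 B]; rewrite /leq_l /= => /(congr1 (horner^~ 1)).
  rewrite !hornerM !hornerXn !expr1n !mul1r => E.
  move: pr; rewrite E => pr.
  have pr0 := pr.
  case/primeP: pr => _ /(_ A.[1]) H.
  have : (A.[1] %| A.[1] * B.[1])%N by apply: dvdn_mulr.
  move=> /H /orP [/eqP A1|/eqP EA]; first by left; apply: unit1.
  right; apply: unit1 => /=.
  have Apos : (0 < A.[1])%N.
    move: pr0; rewrite lt0n; apply: contraTneq => A0; by rewrite A0 mul0r.
  apply/eqP; rewrite -(eqn_pmul2l Apos) muln1; apply/eqP.
  by symmetry; exact: EA.
Qed.

End Helpers.

Theorem corollary2p2 (f : laurent) (p q : nat) :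
  prime p -> prime q -> leval1 f = (p + q)%N ->
  exists g h : laurent, lirreducible g /\ lirreducible h /\ leq_l f (ladd g h).
Proof.
move: f => [n P] pp pq; rewrite /leval1 /= => E.
have [G [H [E1 E2]]] : exists G H : {poly nat}, (G + H = P)%R /\ G.[1]%R = p.
  by apply: split_poly; rewrite E leq_addr.
have EH : H.[1]%R = q.
  apply/eqP; rewrite -(eqn_add2l p) -E -E1 hornerD E2; by [].
exists (n, G), (n, H); split; [|split].
- by apply: prime_irr; rewrite E2.
- by apply: prime_irr; rewrite EH.
- rewrite /leq_l /ladd /= -E1 -GRing.mulrDr GRing.mulrA -GRing.exprD.
  by [].
Qed.
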